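(* Let $\mathcal{R}=\{R_1,\ldots,R_n\}$ be a family of axis-aligned rectangles in $\mathbb{R}^2$ such that the $2n$ $x$-coordinates of the vertical sides are pairwise distinct and the $2n$ $y$-coordinates of the horizontal sides are pairwise distinct. Let $a_1,\ldots,a_{2n}$ be its $x$-sequence and $b_1,\ldots,b_{2n}$ its $y$-sequence, and for each $i$ let $a(i)=(j_1,j_2)$ and $b(i)=(j_1',j_2')$. Then there exists a family of axis-aligned squares $\mathcal{S}=\{S_1,\ldots,S_n\}$ whose $x$-sequence equals that of $\mathcal{R}$ and whose $y$-sequence equals that of $\mathcal{R}$ if and only if the following linear program in the variables $x_1,\ldots,x_{2n-1},y_1,\ldots,y_{2n-1}$ is feasible: $$x_k\ge 1,\ y_k\ge 1 \ (k=1,\ldots,2n-1),\qquad \sum_{k=j_1}^{j_2-1}x_k=\sum_{k=j_1'}^{j_2'-1}y_k \ \text{ for every } i=1,\ldots,n, \text{ where } a(i)=(j_1,j_2),\ b(i)=(j_1',j_2').$$ Moreover, from a feasible solution one obtains such squares by setting $l(S_i)=\sum_{k=1}^{j_1-1}x_k$, $r(S_i)=\sum_{k=1}^{j_2-1}x_k$, $b(S_i)=\sum_{k=1}^{j_1'-1}y_k$, $t(S_i)=\sum_{k=1}^{j_2'-1}y_k$.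
   Context: For an axis-aligned rectangle $R$, $l(R),r(R)$ denote the $x$-coordinates of its left and right sides and $b(R),t(R)$ the $y$-coordinates of its bottom and top sides. For a family $\{R_1,\ldots,R_n\}$ of axis-aligned rectangles with pairwise distinct vertical-side $x$-coordinates, list the $2n$ values $l(R_i), r(R_i)$ in increasing order $a'_1<\cdots<a'_{2n}$ and replace each value $l(R_i)$ or $r(R_i)$ by the index $i$; the resulting sequence $a_1,\ldots,a_{2n}$ (in which each $i\in\{1,\ldots,n\}$ appears exactly twice) is the $x$-sequence, and $a(i)=(j_1,j_2)$ denotes the pair of positions $j_1<j_2$ with $a_{j_1}=a_{j_2}=i$. The $y$-sequence $b_1,\ldots,b_{2n}$ and the function $b(i)=(j_1',j_2')$ are defined analogously using the values $b(R_i),t(R_i)$. The same definitions apply to families of squares, which must then also have pairwise distinct such coordinates. *)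

(* Defs.v *)
From HB Require Import structures.
From mathcomp Require Import all_boot all_order all_algebra.
Set Implicit Arguments. Unset Strict Implicit. Unset Printing Implicit Defensive.
Import Order.TTheory GRing.Theory Num.Theory.
Local Open Scope ring_scope.

(* A family of n axis-parallel boxes is given by four coordinate maps
   lo hi (x-direction: l, r) and lo hi (y-direction: b, t) on 'I_n. *)
Definition coordv {R : realFieldType} {n : nat} (lo hi : 'I_n -> R)
  (p : 'I_n * bool) : R := if p.2 then hi p.1 else lo p.1.

Definition distinct_coords {R : realFieldType} {n : nat} (lo hi : 'I_n -> R) :=
  injective (coordv lo hi).

Definition side_seq {R : realFieldType} {n : nat} (lo hi : 'I_n -> R) : seq 'I_n :=
  [seq p.1 | p <- sort (fun p q => (coordv lo hi p <= coordv lo hi q)%R)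
                       (enum {: 'I_n * bool})].

(* a(i) = (pos1 s i, pos2 s i): the 1-based positions of the first and
   second occurrences of i in the sequence s. *)
Definition pos1 {n : nat} (s : seq 'I_n) (i : 'I_n) : nat := (index i s).+1.
Definition pos2 {n : nat} (s : seq 'I_n) (i : 'I_n) : nat :=
  ((index i s).+1 + (index i (drop (index i s).+1 s)).+1)%N.

Definition is_rect_family {R : realFieldType} {n : nat} (l r b t : 'I_n -> R) :=
  forall i, l i < r i /\ b i < t i.

Definition is_square_family {R : realFieldType} {n : nat} (l r b t : 'I_n -> R) :=
  forall i, l i < r i /\ b i < t i /\ r i - l i = t i - b i.

(* Feasibility of the LP in variables x_1..x_{2n-1}, y_1..y_{2n-1}
   (stored in x y : nat -> R; other values irrelevant), for the
   x-sequence a and y-sequence b. *)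
Definition lp_solution {R : realFieldType} (n : nat) (a b : seq 'I_n)
  (x y : nat -> R) : Prop :=
  (forall k : nat, (1 <= k <= (2 * n).-1)%N -> 1 <= x k /\ 1 <= y k) /\
  (forall i : 'I_n,
     \sum_(pos1 a i <= k < pos2 a i) x k = \sum_(pos1 b i <= k < pos2 b i) y k).

(* Main.v *)
Require Import Defs.
From HB Require Import structures.
From mathcomp Require Import all_boot all_order all_algebra zify.
Import Order.TTheory GRing.Theory Num.Theory.
Local Open Scope ring_scope.

Section Aux.
Variables (R : realFieldType) (n : nat).
Local Notation T := ('I_n * bool)%type.
Implicit Types (f g : T -> R).

Definition lef f := fun p q : T => f p <= f q.
Definition srt f := sort (lef f) (enum {: T}).

Lemma side_seqE (lo hi : 'I_n -> R) : side_seq lo hi = map fst (srt (coordv lo hi)).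
Proof. by []. Qed.

Lemma lef_tr f : transitive (lef f).
Proof. move=> y x z; exact: le_trans. Qed.

Lemma srt_sorted f : sorted (lef f) (srt f).
Proof. apply: sort_sorted => p q; exact: le_total. Qed.

Lemma srt_uniq f : uniq (srt f).
Proof. by rewrite sort_uniq enum_uniq. Qed.

Lemma srt_mem f p : p \in srt f.
Proof. by rewrite mem_sort mem_enum. Qed.

Lemma srt_size f : size (srt f) = (2 * n)%N.
Proof. by rewrite size_sort -cardE card_prod card_ord card_bool mulnC. Qed.

Lemma idx_le f : injective f -> forall p q,
  (index p (srt f) <= index q (srt f))%N = (f p <= f q).
Proof.
move=> finj p q.
have tr := lef_tr f; have so := srt_sorted f.
have mp := srt_mem f p; have mq := srt_mem f q.
apply/idP/idP.
- rewrite leq_eqVlt => /orP [/eqP E | lt].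
  + have : nth p (srt f) (index p (srt f)) = nth p (srt f) (index q (srt f)) by rewrite E.
    by rewrite !nth_index // => ->.
  + exact: (sorted_ltn_index tr so p q mp mq lt).
- move=> le; rewrite leqNgt; apply/negP => lt.
  have le2 := sorted_ltn_index tr so q p mq mp lt.
  have E : f p = f q by apply/le_anti; rewrite le.
  by move: lt; rewrite (finj _ _ E) ltnn.
Qed.

Lemma side_eq f g : injective f -> (forall p q, (f p <= f q) = (g p <= g q)) ->
  srt f = srt g.
Proof.
move=> finj H.
apply: (sorted_eq (lef_tr f)).
- move=> p q /andP [h1 h2]; apply: finj; apply/le_anti; by move: h1 h2; rewrite /lef => -> ->.
- exact: srt_sorted.
- rewrite (eq_sorted (e' := lef g)); first exact: srt_sorted.
  move=> p q; exact: H.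
- by rewrite /srt perm_sort perm_sym perm_sort.
Qed.

Lemma posA f : injective f -> (forall i, f (i,false) < f (i,true)) -> forall i,
  pos1 (map fst (srt f)) i = (index (i,false) (srt f)).+1 /\
  pos2 (map fst (srt f)) i = (index (i,true) (srt f)).+1.
Proof.
move=> finj fmono i.
have Hle := @idx_le f finj (i,false) (i,true).
rewrite (ltW (fmono i)) in Hle.
move: (srt_mem f (i,false)) (srt_mem f (i,true)) (srt_uniq f) Hle.
rewrite /pos1 /pos2; move: (srt f) => S.
case/splitPr => p1 p2.
rewrite mem_cat in_cons /= => Ht U Hle.
have nf1 : (i,false) \notin p1.
  by move: U; rewrite cat_uniq /= => /and3P [_ /norP [] ].
have nt1 : (i,true) \notin p1.
  apply/negP => H1; move: Hle.
  rewrite index_cat (negbTE nf1) index_cat H1 /= eqxx addn0.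
  by rewrite leqNgt index_mem H1.
rewrite (negbTE nt1) /= in Ht.
have {}Ht : (i,true) \in p2 by move: Ht; rewrite xpair_eqE andbF.
move: U; case/splitPr: Ht => p3 p4 U.
clear Hle.
have nf3 : (i,false) \notin p3.
  move: U; rewrite cat_uniq /= => /and3P [_ _ H]; move: H => /andP [H _]; move: H; rewrite mem_cat negb_or => /andP [] //.
have nt3 : (i,true) \notin p3.
  move: U; rewrite cat_uniq /= cat_uniq /= => /and5P [_ _ _ _ /andP [H _]]; move: H; rewrite negb_or => /andP [] //.
have nm : forall p, (i,false) \notin p -> (i,true) \notin p -> i \notin map fst p.
  move=> p h1 h2; apply/mapP => [[[j c] Hj /= E]]; subst j.
  by case: c Hj => H; [move: h2 | move: h1]; rewrite H.
rewrite map_cat /= ?map_cat /=.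
rewrite !index_cat (negbTE nf1) (negbTE nt1) (negbTE (nm _ nf1 nt1)) /= !eqxx addn0 size_map.
split; first by rewrite addn0.
rewrite xpair_eqE eqxx /=.
rewrite -cat_rcons drop_size_cat ?size_rcons ?size_map //.
rewrite !index_cat (negbTE (nm _ nf3 nt3)) (negbTE nt3) /= !eqxx !addn0 size_map addnS.
by rewrite addSn addnS.
Qed.

End Aux.
Arguments srt {R n}.
Arguments lef {R n}.
Arguments side_seqE {R n}.
Arguments lef_tr {R n}.
Arguments srt_sorted {R n}.
Arguments srt_uniq {R n}.
Arguments srt_mem {R n}.
Arguments srt_size {R n}.
Arguments idx_le {R n f}.
Arguments side_eq {R n f g}.
Arguments posA {R n f}.

Section Main.
Variable R : realFieldType.

Definition Xs (x : nat -> R) j := \sum_(1 <= k < j) x k.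

Lemma Xs_lt (x : nat -> R) N : (forall k, (1 <= k <= N.-1)%N -> 1 <= x k) ->
  forall j j', (1 <= j)%N -> (j < j' <= N)%N -> Xs x j < Xs x j'.
Proof.
move=> hx j j' j1; elim: j' => [|j' IH] //= /andP [lt le].
have xpos : 0 < x j'.
  apply: (lt_le_trans ltr01); apply: hx; apply/andP; split; lia.
have -> : Xs x j'.+1 = Xs x j' + x j' by rewrite /Xs big_nat_recr //=; lia.
rewrite ltnS leq_eqVlt in lt; case/orP: lt => [/eqP -> | lt].
  by rewrite ltrDl.
apply: (lt_trans (IH _)); first by rewrite lt /=; lia.
by rewrite ltrDl.
Qed.

Lemma Xs_le (x : nat -> R) N : (forall k, (1 <= k <= N.-1)%N -> 1 <= x k) ->
  forall a b, (1 <= a <= N)%N -> (1 <= b <= N)%N -> (Xs x a <= Xs x b) = (a <= b)%N.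
Proof.
move=> hx a b /andP [a1 aN] /andP [b1 bN].
case: (ltngtP a b) => [lt|gt|->].
- by rewrite ltW // (@Xs_lt x N hx) // lt bN.
- by rewrite lt_geF // (@Xs_lt x N hx) // gt aN.
- by rewrite lexx.
Qed.

Lemma Xs_diff (x : nat -> R) a b : (1 <= a <= b)%N ->
  Xs x b - Xs x a = \sum_(a <= k < b) x k.
Proof.
move=> /andP [a1 ab].
by rewrite /Xs (big_cat_nat a1 ab) /= addrAC subrr add0r.
Qed.

Lemma half n (lo hi : 'I_n -> R) (x : nat -> R) : (forall i, lo i < hi i) ->
  distinct_coords lo hi ->
  (forall k, (1 <= k <= (2*n).-1)%N -> 1 <= x k) ->
  let lo' := fun i => Xs x (pos1 (side_seq lo hi) i) in
  let hi' := fun i => Xs x (pos2 (side_seq lo hi) i) in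
  [/\ forall i, lo' i < hi' i,
      forall i, hi' i - lo' i =
        \sum_(pos1 (side_seq lo hi) i <= k < pos2 (side_seq lo hi) i) x k,
      distinct_coords lo' hi' & side_seq lo' hi' = side_seq lo hi].
Proof.
move=> mono dc hx lo' hi'.
set f := coordv lo hi.
have mono' : forall i, f (i,false) < f (i,true) by [].
have P := posA dc mono'.
pose f' := fun p => Xs x (index p (srt f)).+1.
have E : forall p, coordv lo' hi' p = f' p.
  by case=> i [] ; rewrite /coordv /lo' /hi' /= side_seqE -/f; case: (P i) => E1 E2; rewrite ?E1 ?E2.
have bound : forall p, (1 <= (index p (srt f)).+1 <= 2*n)%N.
  by move=> p; rewrite ltnS /= -(srt_size f) index_mem srt_mem.
have ord : forall p q, (coordv lo' hi' p <= coordv lo' hi' q) = (f p <= f q).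
  by move=> p q; rewrite !E /f' (@Xs_le x _ hx) ?bound // ltnS idx_le.
have inj' : distinct_coords lo' hi'.
  move=> p q /eqP; rewrite eq_le !ord -eq_le => /eqP; exact: dc.
split=> //.
- move=> i; have := ord (i,true) (i,false); rewrite /= => H.
  by rewrite ltNge H -ltNge.
- move=> i; rewrite /lo' /hi' Xs_diff // side_seqE -/f; case: (P i) => -> ->.
  by rewrite /= ltnS (idx_le dc) (ltW (mono' i)).
- by have := side_eq inj' ord; rewrite /srt /side_seq => ->.
Qed.

Lemma c_idx n (f : 'I_n * bool -> R) p : nth 0 (map f (srt f)) (index p (srt f)) = f p.
Proof. by rewrite (nth_map p) ?nth_index ?srt_mem // index_mem srt_mem. Qed.

Lemma gap_pos n (f : 'I_n * bool -> R) : injective f -> forall k, (1 <= k <= (2*n).-1)%N ->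
  0 < nth 0 (map f (srt f)) k - nth 0 (map f (srt f)) k.-1.
Proof.
move=> finj k /andP [k1 kN].
have n0 : (0 < n)%N by lia.
pose p0 : 'I_n * bool := (Ordinal n0, false).
have ks : (k < size (srt f))%N by rewrite srt_size; lia.
have ks' : (k.-1 < size (srt f))%N by rewrite srt_size; lia.
rewrite !(nth_map p0) // subr_gt0 lt_neqAle.
apply/andP; split.
- apply/negP => /eqP /finj /eqP; rewrite nth_uniq ?srt_uniq //; lia.
- have lt : (k.-1 < k)%N by lia.
  exact: (sorted_ltn_nth (lef_tr f) p0 (srt_sorted f) (k.-1) k ks' ks lt).
Qed.

Lemma exists_min (h : nat -> R) N : (forall k, (k < N)%N -> 0 < h k) ->
  exists m, 0 < m /\ forall k, (k < N)%N -> m <= h k.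
Proof.
elim: N => [|N IH] hpos; first by exists 1; split => // k.
have [m [m0 hm]] := IH (fun k hk => hpos k (ltnW hk)).
exists (Num.min m (h N)); split.
- by rewrite lt_min m0 hpos.
- move=> k; rewrite ltnS leq_eqVlt => /orP [/eqP -> | lt].
  + by rewrite ge_min lexx orbT.
  + by rewrite ge_min hm.
Qed.

Lemma forward n (l r b t : 'I_n -> R) : is_square_family l r b t ->
  distinct_coords l r -> distinct_coords b t ->
  exists x y : nat -> R, lp_solution (side_seq l r) (side_seq b t) x y.
Proof.
move=> sq dl db.
set f := coordv l r; set g := coordv b t.
have fmono : forall i, f (i,false) < f (i,true) by move=> i; case: (sq i).
have gmono : forall i, g (i,false) < g (i,true) by move=> i; case: (sq i) => _ [].
pose cf k := nth 0 (map f (srt f)) k.-1.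
pose cg k := nth 0 (map g (srt g)) k.-1.
pose h k := Num.min (cf k.+1 - cf k) (cg k.+1 - cg k).
have [m [m0 hm]] : exists m, 0 < m /\ forall k, (k < (2*n).-1)%N -> m <= h k.+1.
  apply: (exists_min (fun k => h k.+1)) => k kN; rewrite lt_min; apply/andP; split.
  - exact: (@gap_pos n f dl (k.+1) ltac:(lia)).
  - exact: (@gap_pos n g db (k.+1) ltac:(lia)).
pose x k := (cf k.+1 - cf k) / m.
pose y k := (cg k.+1 - cg k) / m.
exists x, y; split.
- move=> k hk.
  have k0 : (0 < k)%N by lia.
  have := hm k.-1; rewrite prednK // => H.
  have {}H := H ltac:(lia).
  rewrite /x /y !ler_pdivlMr // !mul1r.
  by move: H; rewrite /h le_min => /andP [].
- move=> i; rewrite !side_seqE -/f -/g.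
  have [E1 E2] := posA dl fmono i.
  have [F1 F2] := posA db gmono i.
  rewrite E1 E2 F1 F2 /x /y -!mulr_suml !telescope_sumr; first last.
  + by rewrite ltnS (idx_le dl) (ltW (fmono i)).
  + by rewrite ltnS (idx_le db) (ltW (gmono i)).
  rewrite /cf /cg /= !c_idx /f /g /coordv /=.
  by case: (sq i) => _ [_ ->].
Qed.

End Main.

Theorem mainTheorem3 (R : realFieldType) (n : nat) (l r b t : 'I_n -> R) :
  is_rect_family l r b t ->
  distinct_coords l r -> distinct_coords b t ->
  ((exists l' r' b' t' : 'I_n -> R,
      [/\ is_square_family l' r' b' t',
          distinct_coords l' r', distinct_coords b' t',
          side_seq l' r' = side_seq l r & side_seq b' t' = side_seq b t])
   <-> (exists x y : nat -> R, lp_solution (side_seq l r) (side_seq b t) x y))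
  /\
  (forall x y : nat -> R, lp_solution (side_seq l r) (side_seq b t) x y ->
     let l' := fun i => \sum_(1 <= k < pos1 (side_seq l r) i) x k in
     let r' := fun i => \sum_(1 <= k < pos2 (side_seq l r) i) x k in
     let b' := fun i => \sum_(1 <= k < pos1 (side_seq b t) i) y k in
     let t' := fun i => \sum_(1 <= k < pos2 (side_seq b t) i) y k in
     [/\ is_square_family l' r' b' t',
         distinct_coords l' r', distinct_coords b' t',
         side_seq l' r' = side_seq l r & side_seq b' t' = side_seq b t]).
Proof.
move=> rect dl db.
have M : forall x y : nat -> R, lp_solution (side_seq l r) (side_seq b t) x y ->
     let l' := fun i => \sum_(1 <= k < pos1 (side_seq l r) i) x k in
     let r' := fun i => \sum_(1 <= k < pos2 (side_seq l r) i) x k in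
     let b' := fun i => \sum_(1 <= k < pos1 (side_seq b t) i) y k in
     let t' := fun i => \sum_(1 <= k < pos2 (side_seq b t) i) y k in
     [/\ is_square_family l' r' b' t',
         distinct_coords l' r', distinct_coords b' t',
         side_seq l' r' = side_seq l r & side_seq b' t' = side_seq b t].
  move=> x y [hxy hlp] l' r' b' t'.
  have hx : forall k, (1 <= k <= (2*n).-1)%N -> 1 <= x k by move=> k /hxy [].
  have hy : forall k, (1 <= k <= (2*n).-1)%N -> 1 <= y k by move=> k /hxy [].
  have := @half R n l r x (fun i => proj1 (rect i)) dl hx; move=> /= [H1 H2 H3 H4].
  have := @half R n b t y (fun i => proj2 (rect i)) db hy; move=> /= [G1 G2 G3 G4].
  split => //.
  move=> i; split; first exact: H1.
  split; first exact: G1.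
  have := H2 i; have := G2 i; rewrite /Xs => -> ->; exact: hlp.
split => //.
split.
- move=> [l' [r' [b' [t' [sq dl' db' El Eb]]]]].
  have [x [y H]] := @forward R n _ _ _ _ sq dl' db'.
  by exists x, y; rewrite -El -Eb.
- move=> [x [y H]].
  have := M x y H; move=> /= HH.
  by eexists _, _, _, _; exact: HH.
Qed.
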